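(* Let $m\ge 2$, $\Delta_{m-1}=\{\alpha\in\mathbb{R}^m:\alpha_i\ge 0,\ \sum_i\alpha_i=1\}$, and for each $\alpha\in\Delta_{m-1}$ let $\mathcal{J}_\alpha(x,y)$ be a loss differentiable in the input $x\in\mathbb{R}^d$ with gradient $g_\alpha(x,y)=\nabla_x\mathcal{J}_\alpha(x,y)$; for $i=1,\dots,m$ let $g_i(x,y)\in\mathbb{R}^d$ be the input gradient of the single-tool model $i$. Let $\rho_g=\max\{0,\sup_{i\neq j}\sup_{(x,y)}\cos(g_i(x,y),g_j(x,y))\}$. Assume: (i) (local smoothness) there is $\beta>0$ such that for all $\alpha$, $(x,y)$ and all $\delta\in\mathbb{R}^d$, $\mathcal{J}_\alpha(x+\delta,y)\le\mathcal{J}_\alpha(x,y)+\langle g_\alpha(x,y),\delta\rangle+\frac{\beta}{2}\|\delta\|_2^2$; (ii) (bounded gradients) there is $G>0$ with $\|g_i(x,y)\|_2\le G$ for all $i$, $(x,y)$; (iii) (linear aggregation) $g_\alpha=\sum_i\alpha_ig_i+\xi_\alpha$ with $\|\xi_\alpha(x,y)\|_2\le\delta_g$ for all $\alpha$, $(x,y)$; and assume the tool gradients are not perfectly aligned, $\rho_g<1$. Let $\varepsilon>0$ and define the robustness radius $R_\varepsilon(x,y;\alpha)=\sup\{z\ge 0:\forall\delta,\ \|\delta\|_2\le z\Rightarrow \mathcal{J}_\alpha(x+\delta,y)\le\mathcal{J}_\alpha(x,y)+\varepsilon\}$. Let $B(\alpha)=G\sqrt{\rho_g+(1-\rho_g)\|\alpha\|_2^2}+\delta_g$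 (an upper bound on $\|g_\alpha(x,y)\|_2$) and $r(\alpha)=\big(\sqrt{B(\alpha)^2+2\beta\varepsilon}-B(\alpha)\big)/\beta$. Then: $B(\alpha)$ is strictly increasing in $\|\alpha\|_2^2$, so a softer composition (smaller $\|\alpha\|_2^2$) strictly decreases the upper bound on $\|g_\alpha(x,y)\|_2$; and $r(\alpha)$ is a lower bound on $R_\varepsilon(x,y;\alpha)$ for all $(x,y)$, with $r(\alpha)>r(e_j)$ for every non-one-hot $\alpha\in\Delta_{m-1}$ (i.e. $\|\alpha\|_2^2<1$) and every hard selection $e_j$ (a standard basis vector, $\|e_j\|_2^2=1$).
   Context: Setting: a base LLM with parameters $\theta$ and $m$ tools, tool $i$ represented by a parameter increment $\Delta\theta_i$; $\mathcal{J}_\alpha$ is the loss of the model with parameters $\theta+\sum_i\alpha_i\Delta\theta_i$ on input context $x$ and target action $y$, and $g_i$ the input gradient of the loss with parameters $\theta+\Delta\theta_i$. A ''hard selection'' is a one-hot weight vector; a ''soft composition'' is any other weight vector in the simplex. *)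

(* Defs.v *)
From HB Require Import structures.
From mathcomp Require Import all_boot all_order all_algebra.
From mathcomp Require Import all_classical all_reals all_analysis.
Set Implicit Arguments. Unset Strict Implicit. Unset Printing Implicit Defensive.
Import Order.TTheory GRing.Theory Num.Theory.
Import numFieldNormedType.Exports.
Local Open Scope classical_set_scope.
Local Open Scope ring_scope.

Section Defs.
Variable R : realType.

Definition dotv (n : nat) (u v : 'rV[R]_n) : R := \sum_(i < n) u 0 i * v 0 i.
Definition norm2 (n : nat) (u : 'rV[R]_n) : R := Num.sqrt (dotv u u).

(* cosine similarity; convention: 0 if one of the vectors is 0 *)
Definition cosv (n : nat) (u v : 'rV[R]_n) : R := dotv u v / (norm2 u * norm2 v).

Definition simplex (m : nat) : set 'rV[R]_m :=
  [set a | (forall i, 0 <= a 0 i) /\ \sum_(i < m) a 0 i = 1].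

Definition basisv (m : nat) (j : 'I_m) : 'rV[R]_m := \row_(i < m) (i == j)%:R.

Definition rho_g (m d : nat) (Y : Type) (gi : 'I_m -> 'rV[R]_d -> Y -> 'rV[R]_d) : R :=
  Num.max 0 (sup [set c | exists (i j : 'I_m) x y, i != j /\ c = cosv (gi i x y) (gi j x y)]).

(* robustness radius R_eps(x,y;alpha), valued in extended reals (may be +oo) *)
Definition robust_radius (m d : nat) (Y : Type) (J : 'rV[R]_m -> 'rV[R]_d -> Y -> R)
  (eps : R) (x : 'rV[R]_d) (y : Y) (a : 'rV[R]_m) : \bar R :=
  ereal_sup [set z%:E | z in [set z : R | 0 <= z /\
     forall delta : 'rV[R]_d, norm2 delta <= z -> J a (x + delta) y <= J a x y + eps]].

Definition Bbound (m : nat) (G rho dg : R) (a : 'rV[R]_m) : R :=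
  G * Num.sqrt (rho + (1 - rho) * norm2 a ^+ 2) + dg.

Definition rlow (m : nat) (G rho dg beta eps : R) (a : 'rV[R]_m) : R :=
  (Num.sqrt (Bbound G rho dg a ^+ 2 + 2 * beta * eps) - Bbound G rho dg a) / beta.

End Defs.

(* Main.v *)
Require Import Defs.
From HB Require Import structures.
From mathcomp Require Import all_boot all_order all_algebra.
From mathcomp Require Import all_classical all_reals all_analysis.
From mathcomp Require Import ring lra.
Import Order.TTheory GRing.Theory Num.Theory.
Import numFieldNormedType.Exports.
Local Open Scope classical_set_scope.
Local Open Scope ring_scope.

Module Helpers.
Set Implicit Arguments. Unset Strict Implicit.
Section H.
Variable R : realType.
Variable n : nat.
Implicit Types u v w : 'rV[R]_n.

Lemma dotv_ge0 u : 0 <= dotv u u.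
Proof. by apply: sumr_ge0 => i _; rewrite -expr2 sqr_ge0. Qed.

Lemma norm2_ge0 u : 0 <= norm2 u.
Proof. exact: sqrtr_ge0. Qed.

Lemma norm2_sq u : norm2 u ^+ 2 = dotv u u.
Proof. by rewrite /norm2 sqr_sqrtr // dotv_ge0. Qed.

Lemma dotvC u v : dotv u v = dotv v u.
Proof. by apply: eq_bigr => i _; rewrite mulrC. Qed.

Lemma dotvDl u v w : dotv (u + v) w = dotv u w + dotv v w.
Proof. by rewrite /dotv -big_split; apply: eq_bigr => i _; rewrite mxE mulrDl. Qed.

Lemma dotvZl (a : R) u w : dotv (a *: u) w = a * dotv u w.
Proof. by rewrite /dotv mulr_sumr; apply: eq_bigr => i _; rewrite mxE mulrA. Qed.

Lemma dotvNl u w : dotv (- u) w = - dotv u w.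
Proof. by rewrite -scaleN1r dotvZl mulN1r. Qed.

Lemma dotv_suml (m : nat) (F : 'I_m -> 'rV[R]_n) w :
  dotv (\sum_(i < m) F i) w = \sum_(i < m) dotv (F i) w.
Proof.
rewrite /dotv exchange_big /=; apply: eq_bigr => k _.
by rewrite summxE mulr_suml.
Qed.

Lemma dotv0_eq u : dotv u u = 0 -> forall w, dotv u w = 0.
Proof.
move=> H w.
have H0 := psumr_eq0P (fun i _ => (let: x := u 0 i in (eq_ind _ (fun t => 0 <= t) (sqr_ge0 x) _ (expr2 x)))) H.
by apply: big1 => i _; have /eqP := H0 i isT; rewrite mulf_eq0 orbb => /eqP ->; rewrite mul0r.
Qed.

Lemma CS u v : dotv u v <= norm2 u * norm2 v.
Proof.
have hu := norm2_ge0 u; have hv := norm2_ge0 v.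
have [/eqP Hu|Hu] := boolP (norm2 u == 0).
  have : dotv u u = 0 by rewrite -norm2_sq Hu expr0n.
  by move/dotv0_eq => ->; rewrite Hu mul0r.
have [/eqP Hv|Hv] := boolP (norm2 v == 0).
  have : dotv v v = 0 by rewrite -norm2_sq Hv expr0n.
  by move/dotv0_eq => H; rewrite dotvC H Hv mulr0.
have key : 0 <= dotv (norm2 v *: u - norm2 u *: v) (norm2 v *: u - norm2 u *: v).
  exact: dotv_ge0.
rewrite dotvDl dotvNl !dotvZl !(dotvC _ (_ - _)) !dotvDl !dotvNl !dotvZl in key.
rewrite -!norm2_sq (dotvC v u) in key.
have hp : 0 < norm2 u * norm2 v by rewrite mulr_gt0 // lt0r ?Hu ?Hv.
nra.
Qed.

Lemma norm2_triangle u v : norm2 (u + v) <= norm2 u + norm2 v.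
Proof.
have h : dotv (u + v) (u + v) <= (norm2 u + norm2 v) ^+ 2.
  rewrite dotvDl !(dotvC _ (u + v)) !dotvDl (dotvC v u) -!norm2_sq.
  have := CS u v; nra.
rewrite /norm2 -(ger0_norm (addr_ge0 (norm2_ge0 u) (norm2_ge0 v))) -sqrtr_sqr.
by rewrite ler_wsqrtr.
Qed.

End H.

Section H2.
Variable R : realType.
Variables (m d : nat) (Y : Type) (gi : 'I_m -> 'rV[R]_d -> Y -> 'rV[R]_d).

Lemma rho_ge0 : 0 <= rho_g gi.
Proof. by rewrite /rho_g le_max lexx. Qed.

Lemma dot_le_rho i j x y : i != j ->
  dotv (gi i x y) (gi j x y) <= rho_g gi * (norm2 (gi i x y) * norm2 (gi j x y)).
Proof.
move=> hij.
set S := [set c | exists (i j : 'I_m) x y, i != j /\ c = cosv (gi i x y) (gi j x y)].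
have cos1 : forall u v : 'rV[R]_d, cosv u v <= 1.
  move=> u v; rewrite /cosv.
  have [hp|hp] := ltP 0 (norm2 u * norm2 v).
    by rewrite ler_pdivrMr // mul1r CS.
  have -> : norm2 u * norm2 v = 0.
    by apply/eqP; rewrite eq_le hp mulr_ge0 // norm2_ge0.
  by rewrite invr0 mulr0.
have hS : has_sup S.
  split; first by exists (cosv (gi i x y) (gi j x y)); exists i, j, x, y.
  by exists 1 => c [i' [j' [x' [y' [_ ->]]]]].
have hc : cosv (gi i x y) (gi j x y) <= rho_g gi.
  rewrite /rho_g le_max; apply/orP; right.
  by apply: sup_upper_bound => //; exists i, j, x, y.
have [hp|hp] := ltP 0 (norm2 (gi i x y) * norm2 (gi j x y)).
  have -> : dotv (gi i x y) (gi j x y) =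
     cosv (gi i x y) (gi j x y) * (norm2 (gi i x y) * norm2 (gi j x y)).
    by rewrite /cosv mulfVK // gt_eqF.
  by rewrite ler_wpM2r // ltW.
have hz : norm2 (gi i x y) * norm2 (gi j x y) = 0.
  by apply/eqP; rewrite eq_le hp mulr_ge0 // norm2_ge0.
by rewrite hz mulr0 -hz CS.
Qed.

Lemma sum_delta (F : 'I_m -> R) (i : 'I_m) :
  \sum_(j < m) F j * (i == j)%:R = F i.
Proof.
rewrite (bigD1 i) //= eqxx mulr1 big1 ?addr0 // => j hj.
by rewrite eq_sym (negbTE hj) mulr0.
Qed.

Lemma sum_bound (a : 'rV[R]_m) x y (G : R) :
  a \in @simplex R m -> (forall i, norm2 (gi i x y) <= G) ->
  dotv (\sum_(i < m) a 0 i *: gi i x y) (\sum_(i < m) a 0 i *: gi i x y)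
   <= G ^+ 2 * (rho_g gi + (1 - rho_g gi) * norm2 a ^+ 2).
Proof.
rewrite inE => -[a0 a1] hG.
have hr := rho_ge0.
set S := \sum_(i < m) _.
have -> : dotv S S = \sum_(i < m) \sum_(j < m)
    a 0 i * a 0 j * dotv (gi i x y) (gi j x y).
  rewrite /S dotv_suml; apply: eq_bigr => i _.
  rewrite dotvZl dotvC dotv_suml mulr_sumr; apply: eq_bigr => j _.
  by rewrite dotvZl dotvC mulrA.
apply: (@le_trans _ _ (\sum_(i < m) \sum_(j < m)
    a 0 i * a 0 j * (rho_g gi * G ^+ 2 + (i == j)%:R * ((1 - rho_g gi) * G ^+ 2)))).
  apply: ler_sum => i _; apply: ler_sum => j _.
  apply: ler_wpM2l; first by rewrite mulr_ge0.
  have hGi := hG i; have hGj := hG j.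
  have n0i := norm2_ge0 (gi i x y); have n0j := norm2_ge0 (gi j x y).
  have [/eqP <-|hij] := boolP (i == j).
    rewrite mul1r -norm2_sq.
    have : norm2 (gi i x y) ^+ 2 <= G ^+ 2.
      by rewrite lerXn2r // ?nnegrE //; apply: le_trans hGi.
    lra.
  rewrite mul0r addr0; apply: (le_trans (dot_le_rho x y hij)).
  apply: ler_wpM2l => //; rewrite expr2; apply: ler_pM => //.
have -> : \sum_(i < m) \sum_(j < m)
    a 0 i * a 0 j * (rho_g gi * G ^+ 2 + (i == j)%:R * ((1 - rho_g gi) * G ^+ 2))
  = \sum_(i < m) (a 0 i * (rho_g gi * G ^+ 2) + a 0 i * a 0 i * ((1 - rho_g gi) * G ^+ 2)).
  apply: eq_bigr => i _.
  transitivity (\sum_(j < m) (a 0 i * (rho_g gi * G ^+ 2)) * a 0 j +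
    \sum_(j < m) (a 0 i * a 0 j * ((1 - rho_g gi) * G ^+ 2)) * (i == j)%:R).
    by rewrite -big_split; apply: eq_bigr => j _ /=; ring.
  by rewrite -mulr_sumr a1 mulr1 (sum_delta (fun j => a 0 i * a 0 j * _)).
rewrite big_split /= -mulr_suml a1 -mulr_suml norm2_sq /dotv.
by rewrite le_eqVlt; apply/orP; left; apply/eqP; ring.
Qed.

End H2.

Section H3.
Variable R : realType.

Lemma f_decr (beta c B1 B2 : R) : 0 < beta -> 0 < c -> B1 < B2 ->
  (Num.sqrt (B2 ^+ 2 + c) - B2) / beta < (Num.sqrt (B1 ^+ 2 + c) - B1) / beta.
Proof.
move=> hb hc h12.
rewrite ltr_pM2r ?invr_gt0 //.
have q1 : 0 <= B1 ^+ 2 + c by rewrite addr_ge0 ?sqr_ge0 ?ltW.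
have q2 : 0 <= B2 ^+ 2 + c by rewrite addr_ge0 ?sqr_ge0 ?ltW.
have e1 := sqr_sqrtr q1; have e2 := sqr_sqrtr q2.
have p1 := sqrtr_ge0 (B1 ^+ 2 + c); have p2 := sqrtr_ge0 (B2 ^+ 2 + c).
set s1 := Num.sqrt _ in e1 p1 *; set s2 := Num.sqrt _ in e2 p2 *.
have l1 : B1 < s1 by nra.
have l2 : B2 < s2 by nra.
nra.
Qed.

Lemma sqrt_incr (G rho t t' : R) : 0 < G -> 0 <= rho -> rho < 1 -> 0 <= t -> t < t' ->
  G * Num.sqrt (rho + (1 - rho) * t) < G * Num.sqrt (rho + (1 - rho) * t').
Proof.
move=> hG hr hr1 ht htt.
rewrite ltr_pM2l // ltr_sqrt; first by nra.
nra.
Qed.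

End H3.

End Helpers.
Import Helpers.

Theorem corollary3p7 (R : realType) (m d : nat) (Y : Type)
  (J : 'rV[R]_m -> 'rV[R]_d -> Y -> R)
  (g : 'rV[R]_m -> 'rV[R]_d -> Y -> 'rV[R]_d)
  (gi : 'I_m -> 'rV[R]_d -> Y -> 'rV[R]_d)
  (beta G dg eps : R) :
  (2 <= m)%N ->
  (* g_alpha is the input gradient of J_alpha *)
  (forall a x y, a \in @simplex R m ->
     differentiable (fun z => J a z y) x /\
     forall v, is_derive x v (fun z => J a z y) (dotv (g a x y) v)) ->
  (* (i) local smoothness *)
  0 < beta ->
  (forall a x y (delta : 'rV[R]_d), a \in @simplex R m ->
     J a (x + delta) y <= J a x y + dotv (g a x y) delta + beta / 2 * norm2 delta ^+ 2) ->
  (* (ii) bounded gradients *)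
  0 < G ->
  (forall i x y, norm2 (gi i x y) <= G) ->
  (* (iii) linear aggregation: g_alpha = sum_i alpha_i g_i + xi_alpha, ||xi_alpha|| <= dg *)
  (forall a x y, a \in @simplex R m ->
     norm2 (g a x y - \sum_(i < m) a 0 i *: gi i x y) <= dg) ->
  (* tool gradients not perfectly aligned *)
  rho_g gi < 1 ->
  0 < eps ->
  (* B strictly increasing in ||alpha||^2 *)
  (forall a a', a \in @simplex R m -> a' \in @simplex R m ->
     norm2 a ^+ 2 < norm2 a' ^+ 2 ->
     Bbound G (rho_g gi) dg a < Bbound G (rho_g gi) dg a') /\
  (* B bounds the gradient norm *)
  (forall a x y, a \in @simplex R m -> norm2 (g a x y) <= Bbound G (rho_g gi) dg a) /\
  (* r(alpha) lower-bounds the robustness radius *)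
  (forall a x y, a \in @simplex R m ->
     ((rlow G (rho_g gi) dg beta eps a)%:E <= robust_radius J eps x y a)%E) /\
  (* soft compositions beat every hard selection *)
  (forall a (j : 'I_m), a \in @simplex R m -> norm2 a ^+ 2 < 1 ->
     rlow G (rho_g gi) dg beta eps (@basisv R m j) < rlow G (rho_g gi) dg beta eps a).
Proof.
move=> hm _ hb hsm hG hgi hlin hr1 he.
have hr0 := rho_ge0 gi.
set rho := rho_g gi.
have nb : forall a x y, a \in @simplex R m -> norm2 (g a x y) <= Bbound G rho dg a.
  move=> a x y ha.
  set S := \sum_(i < m) a 0 i *: gi i x y.
  rewrite -[g a x y](subrK S) /Bbound addrC.
  apply: (le_trans (norm2_triangle _ _)); apply: lerD; last exact: hlin.
  rewrite /norm2.
  have -> : G * Num.sqrt (rho + (1 - rho) * Num.sqrt (dotv a a) ^+ 2)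
     = Num.sqrt (G ^+ 2 * (rho + (1 - rho) * Num.sqrt (dotv a a) ^+ 2)).
    by rewrite sqrtrM ?sqr_ge0 // sqrtr_sqr gtr0_norm.
  by rewrite ler_wsqrtr // sum_bound.
have Bmono : forall a a' : 'rV[R]_m, norm2 a ^+ 2 < norm2 a' ^+ 2 ->
    Bbound G rho dg a < Bbound G rho dg a'.
  move=> a a' h; rewrite /Bbound ltrD2r; apply: sqrt_incr => //.
  exact: sqr_ge0.
split; first by move=> a a' _ _; exact: Bmono.
split; first exact: nb.
split.
  move=> a x y ha.
  have hB0 : 0 <= Bbound G rho dg a := le_trans (norm2_ge0 _) (nb a x y ha).
  set B := Bbound G rho dg a in hB0 *.
  have q : 0 <= B ^+ 2 + 2 * beta * eps.
    by rewrite addr_ge0 ?sqr_ge0 //; apply: mulr_ge0; [apply: mulr_ge0|]; rewrite ?ltW.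
  have es := sqr_sqrtr q; have s0 := sqrtr_ge0 (B ^+ 2 + 2 * beta * eps).
  set s := Num.sqrt _ in es s0.
  have sB : B <= s by nra.
  set r := rlow G rho dg beta eps a.
  have hr : beta * r = s - B by rewrite /r /rlow -/B -/s mulrC divfK ?gt_eqF.
  have r0 : 0 <= r.
    have : 0 <= beta * r by rewrite hr subr_ge0.
    by rewrite pmulr_rge0.
  have key : B * r + beta / 2 * r ^+ 2 = eps.
    apply: (@mulfI _ (2 * beta)); first by rewrite mulf_neq0 ?gt_eqF.
    have -> : 2 * beta * (B * r + beta / 2 * r ^+ 2) = 2 * B * (beta * r) + (beta * r) ^+ 2.
      by field.
    rewrite hr; nra.
  apply: ereal_sup_ubound; exists r => //; split => // delta hd.
  apply: (le_trans (hsm a x y delta ha)).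
  have nd0 := norm2_ge0 delta.
  have c1 := CS (g a x y) delta.
  have c2 := nb a x y ha; rewrite -/B in c2.
  have ng0 := norm2_ge0 (g a x y).
  have : dotv (g a x y) delta <= B * r.
    apply: (le_trans c1); apply: ler_pM => //.
  have : beta / 2 * norm2 delta ^+ 2 <= beta / 2 * r ^+ 2.
    apply: ler_wpM2l; first by rewrite divr_ge0 ?ltW.
    by rewrite lerXn2r // ?nnegrE.
  lra.
move=> a j ha ha1.
have he1 : norm2 (@basisv R m j) ^+ 2 = 1.
  rewrite norm2_sq /dotv.
  rewrite (eq_bigr (fun i => (fun i => (j == i)%:R) i * (j == i)%:R)).
    by rewrite (sum_delta (fun i => (j == i)%:R) j) eqxx.
  by move=> i _; rewrite mxE eq_sym.
rewrite /rlow; apply: f_decr => //.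
  by rewrite mulr_gt0 // mulr_gt0.
by apply: Bmono; rewrite he1.
Qed.
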